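(* Let $\mathbf B\in\mathcal B_n$ and let $|G\rangle=Z_{\mathbf B}|+\rangle^{\otimes n}$ be the associated graph state. Then there exist $\mathbf v\in\mathbb F_2^n$, an upper triangular matrix $\mathbf A\in GL_n(\mathbb F_2)$ and a reduced matrix $\mathbf B_{\mathrm{red}}\in\mathcal B_n$ such that $$|G\rangle=Z_{\mathbf v}\,X_{\mathbf A}\,Z_{\mathbf B_{\mathrm{red}}}\,|+\rangle^{\otimes n}.$$
   Context: Qubits are labelled $0,\dots,n-1$; the computational basis of $(\mathbb C^2)^{\otimes n}$ is $\{|x\rangle : x\in\mathbb F_2^n\}$. $|+\rangle=\frac1{\sqrt2}(|0\rangle+|1\rangle)$. For $\mathbf v\in\mathbb F_2^n$, $Z_{\mathbf v}$ is the unitary with $Z_{\mathbf v}|x\rangle=(-1)^{\sum_i v_ix_i}|x\rangle$ (a product of Pauli $Z$ gates). For $\mathbf A\in GL_n(\mathbb F_2)$, $X_{\mathbf A}$ is the unitary with $X_{\mathbf A}|x\rangle=|\mathbf Ax\rangle$ (realizable by CNOT gates). $\mathcal B_n$ is the set of symmetric $n\times n$ matrices over $\mathbb F_2$ with zero diagonal; for $\mathbf B=(b_{ij})\in\mathcal B_n$, $Z_{\mathbf B}|x\rangle=(-1)^{\sum_{i<j}b_{ij}x_ix_j}|x\rangle$ (a product of CZ gates). A matrix $\mathbf B\in\mathcal B_n$ is called reduced if each row and each column of $\mathbf B$ contains at most one non-zero entry. *)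

(* Defs.v *)
From HB Require Import structures.
From mathcomp Require Import all_boot all_order all_algebra all_field.
Set Implicit Arguments. Unset Strict Implicit. Unset Printing Implicit Defensive.
Import GRing.Theory Num.Theory.
Local Open Scope ring_scope.

(* Computational basis vectors x in F_2^n are column vectors 'cV['F_2]_n.
   An n-qubit state is its vector of amplitudes, a function F_2^n -> algC. *)
Definition state (n : nat) := {ffun 'cV['F_2]_n -> algC}.

Definition sgnF2 (b : 'F_2) : algC := if b == 0 then 1 else -1.

Definition plus_state (n : nat) : state n := [ffun _ => (sqrtC 2)^-1 ^+ n].

Definition Zv (n : nat) (v : 'cV['F_2]_n) (psi : state n) : state n :=
  [ffun x : 'cV['F_2]_n => sgnF2 (\sum_(i < n) v i 0 * x i 0) * psi x].

(* X_A |x> = |A x>, extended linearly: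
   (X_A psi)(y) = sum over x with A x = y of psi(x) *)
Definition XA (n : nat) (A : 'M['F_2]_n) (psi : state n) : state n :=
  [ffun y : 'cV['F_2]_n => \sum_(x : 'cV['F_2]_n | A *m x == y) psi x].

Definition ZB (n : nat) (B : 'M['F_2]_n) (psi : state n) : state n :=
  [ffun x : 'cV['F_2]_n => sgnF2 (\sum_(i < n) \sum_(j < n | (i < j)%N) B i j * x i 0 * x j 0)
             * psi x].

Definition in_Bn (n : nat) (B : 'M['F_2]_n) : Prop :=
  B^T = B /\ forall i, B i i = 0.

Definition reduced (n : nat) (B : 'M['F_2]_n) : Prop :=
  (forall i j k, B i j != 0 -> B i k != 0 -> j = k) /\
  (forall i j k, B i j != 0 -> B k j != 0 -> i = k).

Definition upper_triangular (n : nat) (A : 'M['F_2]_n) : Prop :=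
  forall i j : 'I_n, (j < i)%N -> A i j = 0.

Definition graph_state (n : nat) (B : 'M['F_2]_n) : state n := ZB B (plus_state n).

(* Main.v *)
Require Import Defs.
From HB Require Import structures.
From mathcomp Require Import all_boot all_order all_algebra all_field.
From mathcomp Require Import ring.
Set Implicit Arguments. Unset Strict Implicit. Unset Printing Implicit Defensive.
Import GRing.Theory.
Local Open Scope ring_scope.

Lemma F2c (x : 'F_2) : x = 0 \/ x = 1.
Proof. case: x => [[|[|m]]] //= Hm; [left|right]; exact: val_inj. Qed.
Lemma F2add (x : 'F_2) : x + x = 0.
Proof. case: (F2c x) => ->; first by rewrite addr0. exact: val_inj. Qed.
Lemma F2sq (x : 'F_2) : x * x = x.
Proof. by case: (F2c x) => ->; rewrite ?mulr0 ?mulr1. Qed.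

Definition Qf {n} (C : 'M['F_2]_n) (x : 'cV['F_2]_n) : 'F_2 :=
  \sum_a \sum_b C a b * x a 0 * x b 0.
Definition linf {n} (w x : 'cV['F_2]_n) : 'F_2 := \sum_a w a 0 * x a 0.
Definition qB {n} (R : 'M['F_2]_n) (x : 'cV['F_2]_n) : 'F_2 :=
  \sum_(i < n) \sum_(j < n | (i < j)%N) R i j * x i 0 * x j 0.

Lemma Qf_mx n (C : 'M['F_2]_n) x : Qf C x = (x^T *m C *m x) 0 0.
Proof.
rewrite /Qf mxE exchange_big /=; apply: eq_bigr => b _.
rewrite mxE mulr_suml /=; apply: eq_bigr => a _; rewrite !mxE; ring.
Qed.

Lemma lin_mx n (w x : 'cV['F_2]_n) : linf w x = (w^T *m x) 0 0.
Proof. by rewrite /linf mxE; apply: eq_bigr => a _; rewrite !mxE. Qed.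

Lemma Q_mul n (P C : 'M['F_2]_n) y : Qf C (P *m y) = Qf (P^T *m C *m P) y.
Proof. by rewrite !Qf_mx trmx_mul !mulmxA. Qed.

Lemma lin_mul n (P : 'M['F_2]_n) w y : linf w (P *m y) = linf (P^T *m w) y.
Proof. by rewrite !lin_mx trmx_mul trmxK mulmxA. Qed.

Definition supp {n} (S : {set 'I_n}) (C : 'M['F_2]_n) :=
  forall a b, C a b != 0 -> (a \in S) && (b \in S).
Definition fixout {n} (S : {set 'I_n}) (A : 'M['F_2]_n) :=
  forall a b, a \notin S -> A a b = (a == b)%:R.
Definition uut {n} (A : 'M['F_2]_n) :=
  (forall i j : 'I_n, (j < i)%N -> A i j = 0) /\ (forall i, A i i = 1).
Definition zrc {n} (i : 'I_n) (C : 'M['F_2]_n) : 'M['F_2]_n :=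
  \matrix_(a, b) if (a == i) || (b == i) then 0 else C a b.
Definition ecol {n} (i : 'I_n) (s : 'F_2) : 'cV['F_2]_n :=
  \col_a (if a == i then s else 0).

Lemma F2_eq (p q r : 'F_2) : p = q + r + r -> p = q.
Proof. by move->; rewrite -addrA F2add addr0. Qed.

Lemma F2_1 (x : 'F_2) : x != 0 -> x = 1.
Proof. by case: (F2c x) => ->; rewrite ?eqxx. Qed.

Lemma Qf_add n (C D : 'M['F_2]_n) x : Qf (C + D) x = Qf C x + Qf D x.
Proof.
rewrite /Qf.
under eq_bigr => a _ do under eq_bigr => b _ do rewrite mxE !mulrDl.
under eq_bigr => a _ do rewrite big_split.
by rewrite big_split.
Qed.

Lemma linf_add n (w w' x : 'cV['F_2]_n) : linf (w + w') x = linf w x + linf w' x.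
Proof.
rewrite /linf; under eq_bigr => a _ do rewrite mxE mulrDl.
by rewrite big_split.
Qed.

Lemma linf_scale n s (w x : 'cV['F_2]_n) : linf (s *: w) x = s * linf w x.
Proof. by rewrite /linf mulr_sumr; apply: eq_bigr => a _; rewrite !mxE; ring. Qed.

Lemma linf_e n (i : 'I_n) s x : linf (ecol i s) x = s * x i 0.
Proof.
rewrite /linf (bigD1 i) //= big1 ?addr0; first by rewrite !mxE eqxx.
by move=> a /negbTE ha; rewrite !mxE ha mul0r.
Qed.

Lemma qB_add n (R R' : 'M['F_2]_n) x : qB (R + R') x = qB R x + qB R' x.
Proof.
rewrite /qB.
under eq_bigr => a _ do under eq_bigr => b _ do rewrite mxE !mulrDl.
under eq_bigr => a _ do rewrite big_split.
by rewrite big_split.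
Qed.

Lemma Q_local n (T : {set 'I_n}) C (x x' : 'cV['F_2]_n) :
  supp T C -> (forall a, a \in T -> x a 0 = x' a 0) -> Qf C x = Qf C x'.
Proof.
move=> hC hx; apply: eq_bigr => a _; apply: eq_bigr => b _.
case: (eqVneq (C a b) 0) => [->|nz]; first by rewrite !mul0r.
by case/andP: (hC a b nz) => ha hb; rewrite !hx.
Qed.

Lemma split_var n (C : 'M['F_2]_n) i x :
  Qf C x = Qf (zrc i C) x + x i 0 * linf (\col_j (C i j + C j i)) x + C i i * x i 0.
Proof.
pose D : 'M['F_2]_n := \matrix_(a, b) if (a == i) || (b == i) then C a b else 0.
have E : C = zrc i C + D.
  by apply/matrixP => a b; rewrite !mxE; case: ifP; rewrite ?add0r ?addr0.
rewrite {1}E Qf_add -addrA; congr (_ + _).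
rewrite /Qf (bigD1 i) //=.
have L1 : \sum_b D i b * x i 0 * x b 0 = x i 0 * \sum_b C i b * x b 0.
  rewrite mulr_sumr; apply: eq_bigr => b _; rewrite !mxE eqxx /=; ring.
have L2 : \sum_(a | a != i) \sum_b D a b * x a 0 * x b 0 =
          x i 0 * \sum_(a | a != i) C a i * x a 0.
  rewrite mulr_sumr; apply: eq_bigr => a /negbTE hai.
  rewrite (bigD1 i) //= big1 ?addr0; first by rewrite !mxE hai eqxx /=; ring.
  by move=> b /negbTE hb; rewrite !mxE hai hb /= !mul0r.
rewrite L1 L2 /linf.
under [X in _ = x i 0 * X + _]eq_bigr do rewrite mxE mulrDl.
rewrite big_split /= [X in _ = x i 0 * (_ + X) + _](bigD1 i) //=.
set S1 := \sum_(b < n) _. set S2 := \sum_(a < n | a != i) _.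
have sq := F2sq (x i 0).
rewrite mulrDr mulrDr (mulrCA (x i 0) (C i i)) sq.
symmetry; apply: (@F2_eq _ _ (C i i * x i 0)); ring.
Qed.

Lemma supp_conj n (S : {set 'I_n}) (C P : 'M['F_2]_n) :
  supp S C -> (forall a' a, P a' a != 0 -> a' \in S -> a \in S) ->
  supp S (P^T *m C *m P).
Proof.
move=> hC hP a b nz; apply/andP; split; apply/negPn/negP => hn; move: nz;
  rewrite !mxE => /eqP; apply; apply: big1 => b' _.
  rewrite [(P^T *m C) a b']mxE.
  suff -> : \sum_j P^T a j * C j b' = 0 by rewrite mul0r.
  apply: big1 => a' _; rewrite !mxE.
  case: (eqVneq (P a' a) 0) => [->|nz]; first by rewrite mul0r.
  case: (eqVneq (C a' b') 0) => [->|nzC]; first by rewrite mulr0.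
  by case/andP: (hC _ _ nzC) => /(hP _ _ nz); rewrite (negbTE hn).
case: (eqVneq (P b' b) 0) => [->|nz]; first by rewrite mulr0.
rewrite [(P^T *m C) a b']mxE.
suff -> : \sum_j P^T a j * C j b' = 0 by rewrite mul0r.
apply: big1 => a' _; rewrite !mxE.
case: (eqVneq (C a' b') 0) => [->|nzC]; first by rewrite mulr0.
by case/andP: (hC _ _ nzC) => _ /(hP _ _ nz); rewrite (negbTE hn).
Qed.

Lemma uut_mul n (P Q : 'M['F_2]_n) : uut P -> uut Q -> uut (P *m Q).
Proof.
move=> [P1 P2] [Q1 Q2]; split.
  move=> i j ji; rewrite mxE big1 // => c _.
  case: (ltnP c i) => [ci|ic]; first by rewrite P1 // mul0r.
  by rewrite Q1 ?mulr0 // (leq_trans ji ic).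
move=> i; rewrite mxE (bigD1 i) //= P2 Q2 mulr1 big1 ?addr0 // => c ci.
case: (ltnP c i) => [lt|le]; first by rewrite P1 // mul0r.
by rewrite Q1 ?mulr0 // ltn_neqAle le andbT eq_sym.
Qed.

Lemma fixout_mul n (S : {set 'I_n}) (P Q : 'M['F_2]_n) : fixout S P -> fixout S Q -> fixout S (P *m Q).
Proof.
move=> hP hQ a b aS; rewrite mxE (bigD1 a) //= big1 ?addr0.
  by rewrite hP // eqxx mul1r hQ.
by move=> c /negbTE ca; rewrite hP // eq_sym ca mul0r.
Qed.

Lemma fixout_sub n (S T : {set 'I_n}) (A : 'M['F_2]_n) : T \subset S -> fixout T A -> fixout S A.
Proof. move=> sub hA a b aS; apply: hA; apply: contra aS; exact: (subsetP sub). Qed.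

Lemma fix_coord n (S : {set 'I_n}) (A : 'M['F_2]_n) (y : 'cV['F_2]_n) a : fixout S A -> a \notin S -> (A *m y) a 0 = y a 0.
Proof.
move=> hA aS; rewrite mxE (bigD1 a) //= big1 ?addr0.
  by rewrite hA // eqxx mul1r.
by move=> c /negbTE ca; rewrite hA // eq_sym ca mul0r.
Qed.

Lemma uut_unit n (A : 'M['F_2]_n) : uut A -> A \in unitmx.
Proof.
move=> [A1 A2]; rewrite unitmxE -det_tr det_trig.
  by rewrite big1 ?unitr1 // => i _; rewrite mxE A2.
by apply/is_trig_mxP => i j ij; rewrite mxE A1.
Qed.

Lemma colc_supp n (S : {set 'I_n}) (C : 'M['F_2]_n) i j :
  supp S C -> (\col_j (C i j + C j i) : 'cV['F_2]_n) j 0 != 0 -> j \in S :\ i.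
Proof.
move=> hC; rewrite mxE => nz; rewrite !inE.
case: (eqVneq j i) => [ji|ji] /=; first by move: nz; rewrite ji F2add eqxx.
case: (eqVneq (C i j) 0) => [e|ne]; last by case/andP: (hC _ _ ne).
move: nz; rewrite e add0r => /hC /andP [] //.
Qed.

Lemma min_elt n (S : {set 'I_n}) : S != set0 -> exists2 i, i \in S & forall j, j \in S -> (i <= j)%N.
Proof.
case/set0Pn => i0 i0S.
case: (@arg_minnP _ i0 (mem S) (fun j : 'I_n => nat_of_ord j) i0S) => i iS imin.
by exists i.
Qed.

Lemma sgnF2D a b : sgnF2 (a + b) = sgnF2 a * sgnF2 b.
Proof.
rewrite /sgnF2; case: (F2c a) => ->; case: (F2c b) => ->;
  rewrite ?addr0 ?add0r ?eqxx ?mul1r ?mulr1 //.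
by rewrite F2add eqxx oner_eq0 mulrNN mulr1.
Qed.

Definition Epair {n} (i k : 'I_n) : 'M['F_2]_n :=
  \matrix_(a, b) ((((a == i) && (b == k)) || ((a == k) && (b == i))))%:R.

Definition rowupd {n} (a0 : 'I_n) (u : 'cV['F_2]_n) : 'M['F_2]_n :=
  \matrix_(a, b) ((a == b)%:R + (a == a0)%:R * u b 0).

Lemma rowupd_coord n (a0 : 'I_n) u z a :
  (rowupd a0 u *m z) a 0 = z a 0 + (a == a0)%:R * linf u z.
Proof.
rewrite mxE /linf.
under eq_bigr => b _ do rewrite mxE mulrDl.
rewrite big_split /= (bigD1 a) //= eqxx mul1r big1 ?addr0.
  by congr (_ + _); rewrite mulr_sumr; apply: eq_bigr => b _; ring.
by move=> b /negbTE ba; rewrite eq_sym ba mul0r.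
Qed.

Lemma linf_rowupd n (a0 : 'I_n) u c z :
  linf c (rowupd a0 u *m z) = linf c z + c a0 0 * linf u z.
Proof.
rewrite {1}/linf.
under eq_bigr => a _ do rewrite rowupd_coord mulrDr.
rewrite big_split /=; congr (_ + _).
rewrite (bigD1 a0) //= eqxx mul1r big1 ?addr0 //.
by move=> a /negbTE ->; rewrite mulr0n mul0r mulr0.
Qed.

Lemma rowupd_uut n (a0 : 'I_n) (u : 'cV['F_2]_n) : (forall b : 'I_n, (b <= a0)%N -> u b 0 = 0) -> uut (rowupd a0 u).
Proof.
move=> hu; split=> [a b ba|a]; rewrite mxE.
  case: eqP => [e|_]; first by move: ba; rewrite e ltnn.
  case: eqP => [e|_]; last by rewrite mulr0n mul0r addr0.
  by rewrite hu ?mulr0 ?addr0 // -e ltnW.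
rewrite eqxx; case: eqP => [->|_]; last by rewrite mulr0n mul0r addr0.
by rewrite hu // mulr0 addr0.
Qed.

Lemma rowupd_fix n (S : {set 'I_n}) a0 (u : 'cV['F_2]_n) : a0 \in S -> fixout S (rowupd a0 u).
Proof.
move=> a0S a b aS; rewrite /rowupd mxE.
have -> : (a == a0) = false by apply/eqP => e; move: aS; rewrite e a0S.
by rewrite ?mulr0n mul0r addr0.
Qed.

Lemma rowupd_nz n (a0 : 'I_n) (u : 'cV['F_2]_n) a' a : rowupd a0 u a' a != 0 -> a' = a \/ u a 0 != 0.
Proof.
rewrite mxE; case: (eqVneq a' a) => [->|_]; first by left.
case: (eqVneq (u a 0) 0) => [->|]; last by right.
by rewrite mulr0 addr0 eqxx.
Qed.

Lemma zrc_supp n (S : {set 'I_n}) (C : 'M['F_2]_n) i : supp S C -> supp (S :\ i) (zrc i C).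
Proof.
move=> hC a b; rewrite mxE; case: ifP; first by rewrite eqxx.
by move=> /norP [ai bi] /hC /andP [aS bS]; rewrite !inE ai bi aS bS.
Qed.

Lemma red_of n (R : 'M['F_2]_n) :
  in_Bn R -> (forall i j k, R i j != 0 -> R i k != 0 -> j = k) -> reduced R.
Proof.
move=> [hT _] h; split=> // i j k h1 h2.
have sym : forall a b, R a b = R b a by move=> a b; rewrite -{1}hT mxE.
by apply: (h j); rewrite sym.
Qed.

Lemma qB_E n (i k : 'I_n) x : (i < k)%N -> qB (Epair i k) x = x i 0 * x k 0.
Proof.
move=> ik.
have ikF : (i == k) = false by apply/negP => /eqP e; move: ik; rewrite e ltnn.
have kiF : (k == i) = false by rewrite eq_sym.
rewrite /qB (bigD1 i) //= [X in _ + X]big1 ?addr0.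
  rewrite (bigD1 k) //= [X in _ + X]big1 ?addr0; first by rewrite mxE !eqxx /= mul1r.
  by move=> b /andP [ib /negbTE bk]; rewrite mxE bk ikF andbF /= ?mulr0n !mul0r.
move=> a /negbTE ai; apply: big1 => b ab; rewrite mxE ai /=.
case: (eqVneq a k) => [ak|_] /=; last by rewrite !mul0r.
case: (eqVneq b i) => [bi|_] /=; last by rewrite !mul0r.
by move: ab; rewrite ak bi ltnNge (ltnW ik).
Qed.

Lemma trivial_case n (C : 'M['F_2]_n) : supp set0 C ->
  exists A w R, [/\ uut A, fixout set0 A, in_Bn R /\ reduced R, supp set0 R &
                 forall y, Qf C (A *m y) = linf w y + qB R y].
Proof.
move=> hC; exists 1%:M, 0, 0; split.
- split=> [i j ji|i]; rewrite mxE ?eqxx //.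
  by case: eqP => [e|_] //; move: ji; rewrite e ltnn.
- by move=> a b _; rewrite mxE.
- split; first by split; [rewrite trmx0 | move=> i; rewrite mxE].
  by split=> i j k; rewrite mxE eqxx.
- by move=> a b; rewrite mxE eqxx.
move=> y; rewrite mul1mx.
have -> : Qf C y = 0.
  rewrite /Qf big1 // => a _; rewrite big1 // => b _.
  by case: (eqVneq (C a b) 0) => [->|/hC]; [rewrite !mul0r | rewrite inE].
have -> : linf 0 y = 0 by rewrite /linf big1 // => a _; rewrite mxE mul0r.
have -> : qB 0 y = 0.
  by rewrite /qB big1 // => a _; rewrite big1 // => b _; rewrite mxE !mul0r.
by rewrite addr0.
Qed.

Lemma natb_nz (b : bool) : (b%:R : 'F_2) != 0 -> b.
Proof. by case: b => //; rewrite mulr0n eqxx. Qed.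

Lemma main n m : forall (S : {set 'I_n}) (C : 'M['F_2]_n), (#|S| <= m)%N -> supp S C ->
  exists A w R, [/\ uut A, fixout S A, in_Bn R /\ reduced R, supp S R &
                 forall y, Qf C (A *m y) = linf w y + qB R y].
Proof.
elim: m => [|m IH] S C hcard hC.
  have S0 : S = set0 by apply: cards0_eq; move: hcard; rewrite leqn0 => /eqP.
  by rewrite S0 in hC *; exact: trivial_case.
case: (eqVneq S set0) => [S0|Sne]; first by rewrite S0 in hC *; exact: trivial_case.
have [i iS imin] := min_elt Sne.
set S' := S :\ i.
have hS' : (#|S'| <= m)%N by move: hcard; rewrite (cardsD1 i S) iS.
have iS' : i \notin S' by rewrite !inE eqxx.
have S'S : S' \subset S by apply: subsetDl.
set Z := zrc i C.
have hZ : supp S' Z by apply: zrc_supp.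
set c : 'cV['F_2]_n := \col_j (C i j + C j i).
have hsplit : forall x, Qf C x = Qf Z x + x i 0 * linf c x + C i i * x i 0 := split_var C i.
have cS' : forall j, c j 0 != 0 -> j \in S' := fun j => @colc_supp n S C i j hC.
case: (boolP [exists j, c j 0 != 0]) => [/existsP [j0 hj0] | hK].
  have Kne : [set j | c j 0 != 0] != set0 by apply/set0Pn; exists j0; rewrite inE.
  have [k kK kmin] := min_elt Kne.
  rewrite inE in kK.
  have kS' : k \in S' := cS' k kK.
  have kS : k \in S := subsetP S'S _ kS'.
  have ki : k != i by move: kS'; rewrite !inE => /andP [].
  have ik : (i < k)%N.
    rewrite ltn_neqAle imin // andbT; apply: contra ki => /eqP e.
    by apply/eqP; apply: val_inj.
  have ck : c k 0 = 1 := F2_1 kK.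
  have cmin : forall j : 'I_n, (j < k)%N -> c j 0 = 0.
    move=> j jk; apply/eqP; apply: contraTT jk => h; rewrite -leqNgt; apply: kmin.
    by rewrite inE.
  pose u1 : 'cV['F_2]_n := \col_b ((k < b)%N%:R * c b 0).
  pose P1 := rowupd k u1.
  have uP1 : uut P1.
    apply: rowupd_uut => b bk; rewrite mxE.
    by rewrite ltnNge bk /= mul0r.
  have fP1 : fixout S P1 by apply: rowupd_fix.
  have L1 : forall y : 'cV['F_2]_n, linf c (P1 *m y) = y k 0.
    move=> y; rewrite /P1 linf_rowupd ck mul1r -linf_add.
    suff -> : c + u1 = ecol k 1 by rewrite linf_e mul1r.
    have cE : forall b, C i b + C b i = c b 0 by move=> b; rewrite mxE.
    apply/matrixP => b j; rewrite (ord1 j) !mxE !cE.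
    case: (ltngtP b k) => [bk|kb|bk].
    - have -> : (b == k) = false by apply/negP => /eqP e; move: bk; rewrite e ltnn.
      by rewrite cmin // mulr0n mul0r addr0.
    - have -> : (b == k) = false by apply/negP => /eqP e; move: kb; rewrite e ltnn.
      by rewrite mulr1n mul1r F2add.
    - have bk' : b = k by apply: val_inj.
      by rewrite bk' eqxx mulr0n mul0r addr0 ck.
  have P1c : forall (y : 'cV['F_2]_n) a, a != k -> (P1 *m y) a 0 = y a 0.
    by move=> y a ak; rewrite /P1 rowupd_coord (negbTE ak) mul0r addr0.
  set C1 := P1^T *m Z *m P1.
  have hC1 : supp S' C1.
    apply: supp_conj hZ _ => a' a /rowupd_nz [<- //|].
    rewrite mxE; case: (eqVneq (c a 0) 0) => [->|/cS' //]; by rewrite mulr0 eqxx.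
  set S'' := S' :\ k.
  have hS'' : (#|S''| <= m)%N.
    by apply: leq_trans hS'; rewrite (cardsD1 k S') kS' add1n leqnSn.
  have iS'' : i \notin S'' by rewrite !inE eqxx andbF.
  have kS'' : k \notin S'' by rewrite !inE eqxx.
  have S''S : S'' \subset S by apply: subset_trans S'S; apply: subsetDl.
  set Z1 := zrc k C1.
  have hZ1 : supp S'' Z1 by apply: zrc_supp.
  set mm : 'cV['F_2]_n := \col_j (C1 k j + C1 j k).
  have hsplit1 : forall x, Qf C1 x = Qf Z1 x + x k 0 * linf mm x + C1 k k * x k 0
    := split_var C1 k.
  have mS'' : forall j, mm j 0 != 0 -> j \in S'' := fun j => @colc_supp n S' C1 k j hC1.
  have mi : mm i 0 = 0 by case: (eqVneq (mm i 0) 0) => // /mS''; rewrite (negbTE iS'').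
  pose P2 := rowupd i mm.
  have uP2 : uut P2.
    apply: rowupd_uut => b bi; case: (eqVneq (mm b 0) 0) => // /mS'' bS''.
    have bS : b \in S := subsetP S''S _ bS''.
    have bi' : b != i by move: bS''; rewrite !inE => /andP [_ /andP []].
    have e : b = i by apply: val_inj; apply/eqP; rewrite eqn_leq bi (imin b bS).
    by rewrite e eqxx in bi'.
  have fP2 : fixout S P2 by apply: rowupd_fix.
  have P2c : forall (z : 'cV['F_2]_n) a, a != i -> (P2 *m z) a 0 = z a 0.
    by move=> z a ai; rewrite /P2 rowupd_coord (negbTE ai) mul0r addr0.
  have P2i : forall z : 'cV['F_2]_n, (P2 *m z) i 0 = z i 0 + linf mm z.
    by move=> z; rewrite /P2 rowupd_coord eqxx mul1r.
  have L2 : forall z : 'cV['F_2]_n, linf mm (P2 *m z) = linf mm z.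
    by move=> z; rewrite /P2 linf_rowupd mi mul0r addr0.
  have [A2 [w2 [R2 [hA2 hfA2 [hR2 hR2r] hR2s hQ2]]]] := IH S'' Z1 hS'' hZ1.
  have ikF : (i == k) = false by rewrite eq_sym (negbTE ki).
  have kiF : (k == i) = false by rewrite (negbTE ki).
  have R2row : forall a b, a \notin S'' -> R2 a b = 0.
    move=> a b aS; apply/eqP; apply: contraNT aS => /hR2s /andP [] //.
  exists (P1 *m P2 *m A2),
    (w2 + ecol k (C1 k k) + ecol i (C i i) + C i i *: (A2^T *m mm)), (R2 + Epair i k).
  split.
  - by apply: uut_mul => //; apply: uut_mul.
  - apply: fixout_mul; first exact: fixout_mul.
    exact: fixout_sub S''S hfA2.
  - have sym2 : forall a b, R2 b a = R2 a b.
      by move=> a b; case: hR2 => hT _; rewrite -{1}hT mxE.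
    have hB : in_Bn (R2 + Epair i k).
      split.
        apply/matrixP => a b; rewrite !mxE sym2; congr (_ + _%:R).
        by rewrite orbC (andbC (b == i)) (andbC (b == k)).
      move=> a; rewrite !mxE (hR2.2 a) add0r.
      case: (eqVneq a i) => [->|/negbTE ai]; first by rewrite ikF andbF /= mulr0n.
      by rewrite andbF /= mulr0n.
    split => //; apply: red_of => // a b b'; rewrite !mxE.
    case: (boolP (a \in S'')) => aS.
      have ai : (a == i) = false by apply/eqP => e; rewrite e (negbTE iS'') in aS.
      have ak : (a == k) = false by apply/eqP => e; rewrite e (negbTE kS'') in aS.
      rewrite ai ak /= mulr0n !addr0; exact: hR2r.1.
    rewrite !R2row // !add0r => /natb_nz h1 /natb_nz h2.
    case/orP: h1 => /andP [/eqP ea /eqP eb]; case/orP: h2 => /andP [/eqP ea' /eqP eb'];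
      rewrite ?eb ?eb' //.
    + by move: ki; rewrite -ea' ea eqxx.
    + by move: ki; rewrite -ea' ea eqxx.
  - move=> a b; rewrite !mxE; case: (eqVneq (R2 a b) 0) => [->|/hR2s/andP [aS bS]]; last first.
      by rewrite (subsetP S''S _ aS) (subsetP S''S _ bS).
    rewrite add0r; case: orP => [[/andP [/eqP -> /eqP ->]|/andP [/eqP -> /eqP ->]] _|_].
    + by rewrite iS kS.
    + by rewrite iS kS.
    + by rewrite mulr0n eqxx.
  move=> t; rewrite -!mulmxA.
  rewrite hsplit -/Z Q_mul -/C1 (P1c _ _ (negbT ikF)) L1 hsplit1.
  rewrite (P2c _ _ ki) P2i L2 (@Q_local _ _ _ _ (A2 *m t) hZ1); last first.
    by move=> a aS; apply: P2c; apply: contraNneq iS'' => <-.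
  rewrite hQ2 (fix_coord _ hfA2 iS'') (fix_coord _ hfA2 kS'') lin_mul.
  rewrite !linf_add !linf_e linf_scale qB_add qB_E //.
  apply: (@F2_eq _ _ (t k 0 * linf (A2^T *m mm) t)); ring.
have c0 : forall j, c j 0 = 0.
  by move=> j; apply/eqP; apply: contraNT hK => h; apply/existsP; exists j.
have [A [w [R [hA hfA hR hRs hQ]]]] := IH S' Z hS' hZ.
exists A, (w + ecol i (C i i)), R; split => //.
- exact: fixout_sub S'S hfA.
- by move=> a b /hRs /andP [aS bS]; rewrite (subsetP S'S _ aS) (subsetP S'S _ bS).
move=> y; rewrite hsplit hQ (fix_coord _ hfA iS').
have -> : linf c (A *m y) = 0 by rewrite /linf big1 // => j _; rewrite c0 mul0r.
by rewrite linf_add linf_e; ring.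
Qed.

Unset Implicit Arguments.

Theorem theorem5p2 (n : nat) (B : 'M['F_2]_n) :
  in_Bn B ->
  exists (v : 'cV['F_2]_n) (A : 'M['F_2]_n) (Bred : 'M['F_2]_n),
    [/\ A \in unitmx, upper_triangular A, in_Bn Bred, reduced Bred &
        graph_state B = Zv v (XA A (ZB Bred (plus_state n)))].
Proof.
move=> hB.
pose U : 'M['F_2]_n := \matrix_(a, b) if (a < b)%N then B a b else 0.
have hU : supp [set: 'I_n] U by move=> a b _; rewrite !inE.
have hc : (#|[set: 'I_n]| <= n)%N by rewrite cardsT card_ord.
have [A [w [R [hA _ [hR hRr] _ hQ]]]] := main hc hU.
have Au : A \in unitmx := uut_unit hA.
exists ((invmx A)^T *m w), A, R; split => //; first exact: hA.1.
apply/ffunP => x; rewrite /graph_state /XA /Zv !ffunE.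
rewrite (big_pred1 (invmx A *m x)); last first.
  by move=> y /=; apply/eqP/eqP => [<-|->]; [rewrite mulKmx | rewrite mulKVmx].
rewrite !ffunE -/(qB B x) -/(qB R _) -/(linf _ x).
have E1 : qB B x = linf ((invmx A)^T *m w) x + qB R (invmx A *m x).
  transitivity (Qf U x).
    rewrite /qB /Qf; apply: eq_bigr => a _; rewrite big_mkcond; apply: eq_bigr => b _.
    by rewrite mxE; case: ifP => _ //; rewrite !mul0r.
  by rewrite -{1}(mulKVmx Au x) hQ -lin_mul.
by rewrite E1 sgnF2D mulrA.
Qed.
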